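(* Fix $n\ge1$ and $\varepsilon>0$. If $f_1,f_2\in\mathrm{NN}_n$ satisfy $\mathrm{MSE}(f_i)\le R(\mathrm{NN}_n)+\varepsilon$ for $i\in\{1,2\}$, then \[ D(f_1,f_2)\le4\big(R(\mathrm{NN}_n)-R(\mathrm{NN}_{2n})+\varepsilon\big). \]
   Context: $P$ is a distribution on $\mathcal X\times\mathcal Y$ with $\mathcal X\subseteq\mathbb R^m$, $\mathcal Y\subseteq\mathbb R$; expectations are over $(x,y)\sim P$; $\mathrm{MSE}(f)=\mathbb E[(y-f(x))^2]$, $R(\mathcal F)=\inf_{f\in\mathcal F}\mathrm{MSE}(f)$, $D(f_1,f_2)=\mathbb E[(f_1(x)-f_2(x))^2]$. Let $\sigma(t)=\max\{0,t\}$. For $n\ge0$, $\mathrm{NN}_n$ is the class of real-valued functions on $\mathcal X$ computable by a finite directed acyclic graph with at most $n$ internal (non-input, non-output) nodes, where each internal node computes $\sigma(\langle w,u\rangle+b)$ for the vector $u$ of its inputs and some $w,b$, and the output node computes an affine combination of the input coordinates and the internal node values. *)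

(* Defs.v *)
From HB Require Import structures.
From mathcomp Require Import all_boot all_order all_algebra.
From mathcomp Require Import all_classical all_reals all_analysis.
Set Implicit Arguments. Unset Strict Implicit. Unset Printing Implicit Defensive.
Import Order.TTheory GRing.Theory Num.Theory.
Local Open Scope ring_scope.
Local Open Scope classical_set_scope.

Definition relu {R : realType} (t : R) : R := Num.max 0 t.

(* A ReLU network on inputs in R^m (row vectors 'rV_m), with internal nodes
   listed in a topological order 0, 1, ..., k-1 of the DAG.  Internal node j
   receives input coordinate i with weight [win j i] and internal node l < j
   with weight [wh j l]; an absent edge is a zero weight. *)
Record net (R : realType) (m : nat) := Net {
  win  : nat -> 'I_m -> R;
  wh   : nat -> nat -> R;
  bias : nat -> R;
  aout : 'I_m -> R;
  bout : nat -> R;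
  cout : R }.

Fixpoint hidden (R : realType) (m : nat) (N : net R m) (x : 'rV[R]_m) (j : nat)
  : seq R :=
  match j with
  | 0 => [::]
  | j'.+1 =>
      let prev := hidden N x j' in
      rcons prev (relu (\sum_(i < m) win N j' i * x ord0 i
                        + \sum_(l < j') wh N j' l * nth 0 prev l
                        + bias N j'))
  end.

Definition net_eval (R : realType) (m : nat) (k : nat) (N : net R m)
  (x : 'rV[R]_m) : R :=
  \sum_(i < m) aout N i * x ord0 i
  + \sum_(j < k) bout N j * nth 0 (hidden N x k) j
  + cout N.

Definition NN (R : realType) (m n : nat) : set ('rV[R]_m -> R) :=
  [set f | exists k (N : net R m), (k <= n)%N /\ f = net_eval k N].

Section Risk.
Context {d : measure_display} {T : measurableType d} {R : realType}.
Context (P : probability T R) {m : nat} (x : T -> 'rV[R]_m) (y : T -> R).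
Local Open Scope ereal_scope.

(* (x, y) ~ P is realised as the pair of random variables (x, y) on (T, P). *)
Definition MSE (f : 'rV[R]_m -> R) : \bar R :=
  \int[P]_t (((y t - f (x t)) ^+ 2)%R)%:E.

Definition risk (F : set ('rV[R]_m -> R)) : \bar R :=
  ereal_inf [set MSE f | f in F].

Definition Dist (f1 f2 : 'rV[R]_m -> R) : \bar R :=
  \int[P]_t (((f1 (x t) - f2 (x t)) ^+ 2)%R)%:E.
End Risk.

(* Main.v *)
Require Import Defs.
From HB Require Import structures.
From mathcomp Require Import all_boot all_order all_algebra.
From mathcomp Require Import all_classical all_reals all_analysis.
From mathcomp Require Import measurable_realfun.
From mathcomp Require Import ring lra.
Import Order.TTheory GRing.Theory Num.Theory.
Local Open Scope ring_scope.
Local Open Scope classical_set_scope.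
Import Order.TTheory GRing.Theory Num.Theory.
Local Open Scope ring_scope.
Local Open Scope classical_set_scope.

Section NetLemmas.
Context {R : realType} {m : nat}.

Definition hv (N : net R m) (x : 'rV[R]_m) (j : nat) : R :=
  nth 0 (hidden N x j.+1) j.

Lemma size_hidden (N : net R m) (x : 'rV[R]_m) j : size (hidden N x j) = j.
Proof. by elim: j => //= j IH; rewrite size_rcons IH. Qed.

Lemma nth_hidden (N : net R m) (x : 'rV[R]_m) j l : nth 0 (hidden N x j) l = if (l < j)%N then hv N x l else 0.
Proof.
elim: j l => [|j IH] l; first by rewrite nth_nil.
rewrite /= nth_rcons size_hidden.
case: (ltngtP l j) => hl.
- by rewrite IH hl ltnS ltnW.
- by rewrite ltnS leqNgt hl.
- by rewrite -hl ltnSn /hv /= nth_rcons size_hidden ltnn eqxx.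
Qed.

Lemma hv_eq (N : net R m) (x : 'rV[R]_m) j : hv N x j = relu (\sum_(i < m) win N j i * x ord0 i
   + \sum_(l < j) wh N j l * hv N x l + bias N j).
Proof.
rewrite /hv /= nth_rcons size_hidden ltnn eqxx.
congr (relu (_ + _ + _)); apply: eq_bigr => l _.
by rewrite nth_hidden ltn_ord.
Qed.

Lemma net_evalE k (N : net R m) (x : 'rV[R]_m) : net_eval k N x =
  \sum_(i < m) aout N i * x ord0 i + \sum_(j < k) bout N j * hv N x j + cout N.
Proof.
rewrite /net_eval; congr (_ + _ + _); apply: eq_bigr => j _.
by rewrite nth_hidden ltn_ord.
Qed.


Definition comb (N1 N2 : net R m) (k1 : nat) : net R m := Net
 (fun j i => if (j < k1)%N then win N1 j i else win N2 (j - k1) i)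
 (fun j l => if (j < k1)%N then wh N1 j l else if (l < k1)%N then 0 else wh N2 (j-k1) (l-k1))
 (fun j => if (j < k1)%N then bias N1 j else bias N2 (j-k1))
 (fun i => (aout N1 i + aout N2 i) / 2)
 (fun j => if (j < k1)%N then bout N1 j / 2 else bout N2 (j-k1) / 2)
 ((cout N1 + cout N2) / 2).

Lemma hv_comb (N1 N2 : net R m) k1 (x : 'rV[R]_m) j :
  hv (comb N1 N2 k1) x j = if (j < k1)%N then hv N1 x j else hv N2 x (j - k1).
Proof.
elim/ltn_ind: j => j IH.
case: (ltnP j k1) => hj.
- rewrite !hv_eq /= (_ : (j < k1)%N = true) //; congr (relu (_ + _ + _)).
  apply: eq_bigr => l _.
  by rewrite IH ?ltn_ord // (ltn_trans (ltn_ord l) hj).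
- have [j' hj'] : exists j', j = (k1 + j')%N.
    by exists (j - k1)%N; rewrite subnKC.
  subst j.
  rewrite !hv_eq /= ltnNge leq_addr /= addKn; congr (relu (_ + _ + _)).
  rewrite big_split_ord /= big1 ?add0r => [|l _]; last first.
    by rewrite /= ltn_ord mul0r.
  apply: eq_bigr => l _ /=.
  rewrite ltnNge leq_addr /= addKn IH; last by rewrite /= ltn_add2l.
  by rewrite ltnNge leq_addr /= addKn.
Qed.

Lemma net_eval_comb (N1 N2 : net R m) k1 k2 (x : 'rV[R]_m) :
  net_eval (k1 + k2) (comb N1 N2 k1) x = (net_eval k1 N1 x + net_eval k2 N2 x) / 2.
Proof.
rewrite !net_evalE big_split_ord /=.
have E1 : \sum_(i < k1) bout (comb N1 N2 k1) (lshift k2 i) * hv (comb N1 N2 k1) x (lshift k2 i)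
   = \sum_(i < k1) bout N1 i * hv N1 x i / 2.
  apply: eq_bigr => i _; rewrite hv_comb /= ltn_ord.
  by rewrite mulrAC.
have E2 : \sum_(i < k2) bout (comb N1 N2 k1) (rshift k1 i) * hv (comb N1 N2 k1) x (rshift k1 i)
   = \sum_(i < k2) bout N2 i * hv N2 x i / 2.
  apply: eq_bigr => i _; rewrite hv_comb /= ltnNge leq_addr /= addKn.
  by rewrite mulrAC.
rewrite E1 E2 -!mulr_suml.
have E3 : \sum_(i < m) aout (comb N1 N2 k1) i * x ord0 i =
  (\sum_(i < m) aout N1 i * x ord0 i + \sum_(i < m) aout N2 i * x ord0 i) / 2.
  rewrite -big_split mulr_suml; apply: eq_bigr => i _ /=.
  by rewrite mulrAC mulrDl.
rewrite E3 /=; rewrite !mulrDl; lra.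
Qed.

End NetLemmas.

Section Meas.
Context {d : measure_display} {T : measurableType d} {R : realType} {m : nat}.
Variable x : T -> 'rV[R]_m.
Hypothesis hx : forall i : 'I_m, measurable_fun setT (fun t => x t ord0 i).

Lemma rsum_meas (I : Type) (s : seq I) (F : I -> T -> R) :
  (forall i, measurable_fun setT (F i)) ->
  measurable_fun setT (fun t => \sum_(i <- s) F i t).
Proof.
move=> hF; elim: s => [|a s IH].
  by under eq_fun do rewrite big_nil; exact: measurable_cst.
under eq_fun do rewrite big_cons.
exact: measurable_funD.
Qed.

Lemma mscal (c : R) (f : T -> R) : measurable_fun setT f ->
  measurable_fun setT (fun t => c * f t).
Proof. by move=> mf; apply: measurable_funM => //; exact: measurable_cst. Qed.

Lemma mhv (N : net R m) j : measurable_fun setT (fun t => hv N (x t) j).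
Proof.
elim/ltn_ind: j => j IH.
under eq_fun do rewrite hv_eq /relu.
apply: (@measurable_maxr _ _ _ setT (cst 0)); first exact: measurable_cst.
apply: measurable_funD; last exact: measurable_cst.
apply: measurable_funD.
  by apply: rsum_meas => i; apply: mscal.
apply: rsum_meas => l.
by apply: mscal; apply: IH.
Qed.

Lemma mnet k (N : net R m) : measurable_fun setT (fun t => net_eval k N (x t)).
Proof.
under eq_fun do rewrite net_evalE.
apply: measurable_funD; last exact: measurable_cst.
apply: measurable_funD.
  by apply: rsum_meas => i; apply: mscal.
apply: rsum_meas => l.
by apply: mscal; apply: mhv.
Qed.

End Meas.

Lemma ge0_le_fin {R : realType} (e : \bar R) (c : R) :
  (0 <= e)%E -> (e <= c%:E)%E -> exists r, e = r%:E.
Proof.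
case: e => [r _ _|_|]; first by exists r.
- by rewrite leye_eq.
- by rewrite leNye.
Qed.

Definition net0 {R : realType} {m : nat} : net R m :=
  Net (fun _ _ => 0) (fun _ _ => 0) (fun _ => 0) (fun _ => 0) (fun _ => 0) 0.

Lemma net0E {R : realType} {m : nat} (z : 'rV[R]_m) : net_eval 0 net0 z = 0.
Proof.
rewrite net_evalE big_ord0 big1 ?addr0 // => i _ /=; exact: mul0r.
Qed.

Lemma risk_bounds (d : measure_display) (T : measurableType d) (R : realType)
  (P : probability T R) (m : nat) (x : T -> 'rV[R]_m) (y : T -> R)
  (hy : measurable_fun setT y)
  (hy2 : P.-integrable setT (fun t => ((y t) ^+ 2)%:E)) n :
  exists r, risk P x y (NN (R:=R) (m:=m) n) = r%:E.
Proof.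
have MSE0 : (0 <= risk P x y (NN (R:=R) (m:=m) n))%E.
  apply: le_ereal_inf_tmp => _ [f _ <-].
  by apply: integral_ge0 => s _; rewrite lee_fin sqr_ge0.
move/integrableP: hy2 => [_ hy2].
have : (risk P x y (NN (R:=R) (m:=m) n) <= \int[P]_t `|((y t) ^+ 2)%:E|)%E.
  apply: ereal_inf_lbound; exists (net_eval 0 net0).
    by exists 0%N, net0.
  rewrite /MSE; apply: eq_integral => t _.
  by rewrite net0E subr0 gee0_abs // lee_fin sqr_ge0.
move: hy2; set I := (\int[P]_t _)%E.
case: I => [c _ hc| //|]; last first.
  by move=> _; rewrite leeNy_eq => /eqP h; move: MSE0; rewrite h.
exact: ge0_le_fin MSE0 hc.
Qed.

Lemma int_comb (d : measure_display) (T : measurableType d) (R : realType)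
  (P : {measure set T -> \bar R}) (a b : R) (u v : T -> R) :
  0 <= a -> 0 <= b -> measurable_fun setT u -> measurable_fun setT v ->
  (\int[P]_t ((a * u t ^+ 2 + b * v t ^+ 2)%:E)
   = a%:E * \int[P]_t ((u t ^+ 2)%:E) + b%:E * \int[P]_t ((v t ^+ 2)%:E))%E.
Proof.
move=> a0 b0 mu mv.
have mu2 : measurable_fun setT (fun t => (u t ^+ 2)%:E).
  by apply/measurable_EFinP; apply: measurable_funX.
have mv2 : measurable_fun setT (fun t => (v t ^+ 2)%:E).
  by apply/measurable_EFinP; apply: measurable_funX.
under eq_integral do rewrite EFinD !EFinM.
rewrite ge0_integralD //.
- rewrite (ge0_integralZl_EFin P measurableT (f1 := fun t => (u t ^+ 2)%:E)) //.
  + rewrite (ge0_integralZl_EFin P measurableT (f1 := fun t => (v t ^+ 2)%:E)) //.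
    by move=> t _; rewrite lee_fin sqr_ge0.
  + by move=> t _; rewrite lee_fin sqr_ge0.
- by move=> t _; rewrite -EFinM lee_fin mulr_ge0 // sqr_ge0.
- by apply: measurable_funeM.
- by move=> t _; rewrite -EFinM lee_fin mulr_ge0 // sqr_ge0.
- by apply: measurable_funeM.
Qed.

Theorem corollary2 (d : measure_display) (T : measurableType d) (R : realType)
  (P : probability T R) (m : nat) (x : T -> 'rV[R]_m) (y : T -> R)
  (hx : forall i : 'I_m, measurable_fun setT (fun t => x t ord0 i))
  (hy : measurable_fun setT y)
  (hy2 : P.-integrable setT (fun t => ((y t) ^+ 2)%:E))
  (n : nat) (hn : (1 <= n)%N) (eps : R) (heps : 0 < eps)
  (f1 f2 : 'rV[R]_m -> R) (hf1 : NN (R:=R) (m:=m) n f1) (hf2 : NN (R:=R) (m:=m) n f2)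
  (h1 : (MSE P x y f1 <= risk P x y (NN (R:=R) (m:=m) n) + eps%:E)%E)
  (h2 : (MSE P x y f2 <= risk P x y (NN (R:=R) (m:=m) n) + eps%:E)%E) :
  (Dist P x f1 f2 <= 4%:E * (risk P x y (NN (R:=R) (m:=m) n) - risk P x y (NN (R:=R) (m:=m) (2 * n)) + eps%:E))%E.
Proof.
move: hf1 hf2 h1 h2 => [k1 [N1 [hk1 ->]]] [k2 [N2 [hk2 ->]]] h1 h2.
set g := net_eval (k1 + k2) (comb N1 N2 k1).
have hg : NN (R:=R) (m:=m) (2 * n) g.
  exists (k1 + k2)%N, (comb N1 N2 k1); split => //.
  by rewrite mul2n -addnn leq_add.
have mf1 := @mnet d T R m x hx k1 N1.
have mf2 := @mnet d T R m x hx k2 N2.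
have mg := @mnet d T R m x hx (k1 + k2) (comb N1 N2 k1).
have mA : forall (u v : T -> R), measurable_fun setT u -> measurable_fun setT v ->
    measurable_fun setT (fun t => ((u t - v t) ^+ 2)%:E).
  move=> u v mu mv; apply/measurable_EFinP.
  by apply: measurable_funX; apply: measurable_funB.
have key : (Dist P x (net_eval k1 N1) (net_eval k2 N2) + 4%:E * MSE P x y g
    = 2%:E * MSE P x y (net_eval k1 N1) + 2%:E * MSE P x y (net_eval k2 N2))%E.
  rewrite /Dist /MSE -[X in (X + _)%E]mul1e.
  rewrite -int_comb //; last 2 first.
  - exact: measurable_funB.
  - by apply: measurable_funB.
  rewrite -int_comb //; last 2 first.
  - exact: measurable_funB.
  - exact: measurable_funB.
  apply: eq_integral => t _; congr EFin.
  rewrite /g net_eval_comb.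
  by field.
have [rn Ern] := @risk_bounds d T R P m x y hy hy2 n.
have [r2 Er2] := @risk_bounds d T R P m x y hy hy2 (2 * n).
have hMg : (r2%:E <= MSE P x y g)%E.
  by rewrite -Er2; apply: ereal_inf_lbound; exists g.
have M0 : forall f, (0 <= MSE P x y f)%E.
  by move=> f; apply: integral_ge0 => s _; rewrite lee_fin sqr_ge0.
have D0 : (0 <= Dist P x (net_eval k1 N1) (net_eval k2 N2))%E.
  by apply: integral_ge0 => s _; rewrite lee_fin sqr_ge0.
rewrite Ern in h1 h2.
have [m1 Em1] := ge0_le_fin _ _ (M0 _) h1.
have [m2 Em2] := ge0_le_fin _ _ (M0 _) h2.
rewrite Em1 Em2 -!EFinM -EFinD in key.
have hD : (Dist P x (net_eval k1 N1) (net_eval k2 N2) <= (2 * m1 + 2 * m2)%:E)%E.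
  by rewrite -key leeDl // mule_ge0.
have hG : (4%:E * MSE P x y g <= (2 * m1 + 2 * m2)%:E)%E.
  by rewrite -key leeDr.
have [dd Edd] := ge0_le_fin _ _ D0 hD.
have [mgv Emg] : exists r, MSE P x y g = r%:E.
  case E : (MSE P x y g) hG => [r| |] hG'; first by exists r.
  - by move: hG'; rewrite mulry gtr0_sg // mul1e leye_eq.
  - by move: (M0 g); rewrite E.
rewrite Edd Er2 Ern.
rewrite Emg Edd -EFinM -EFinD in key.
have key2 := EFin_inj key.
rewrite Em1 Em2 !lee_fin in h1 h2.
rewrite Emg lee_fin in hMg.
rewrite -EFinB -EFinD -EFinM lee_fin.
lra.
Qed.
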